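(* Let $G$ be an upward planar single-source digraph with maximum in- and outdegree at most two. Then in every upward planar embedding of $G$, no edge of $G$ is a bad edge with respect to the outer face.
   Context: A planar drawing of a digraph is upward if every edge $(u,v)$ is drawn as a curve strictly increasing in $y$ from $u$ to $v$; an upward planar embedding is the equivalence class of upward planar drawings with the same left-to-right orderings of incoming edges and of outgoing edges around each vertex. A single-source digraph has exactly one vertex of indegree zero. If a vertex has two incoming (outgoing) edges, these are its left and right incoming (outgoing) edges according to the embedding. An edge $e=(u,v)$ is bad with respect to face $f$ if either $e$ is the left outgoing edge of $u$ and the left incoming edge of $v$ and $f$ is the face to the right of $e$, or $e$ is the right outgoing edge of $u$ and the right incoming edge of $v$ and $f$ is the face to the left of $e$. *)

(* Defs.v *)
From mathcomp Require Import all_boot.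
From Stdlib Require Import Reals.
Set Implicit Arguments. Unset Strict Implicit. Unset Printing Implicit Defensive.

Definition outdeg (V : finType) (E : rel V) (u : V) : nat := #|[set w | E u w]|.
Definition indeg (V : finType) (E : rel V) (u : V) : nat := #|[set w | E w u]|.

Definition single_source (V : finType) (E : rel V) : Prop :=
  #|[set w | indeg E w == 0]| = 1.

Definition max_inout_deg_le2 (V : finType) (E : rel V) : Prop :=
  forall u, indeg E u <= 2 /\ outdeg E u <= 2.

Local Open Scope R_scope.

(* An upward planar drawing: vertices are points, every arc (u,v) is a
   continuous curve t |-> (cx u v t, cy u v t), t in [0,1], from u to v whose
   y-coordinate is strictly increasing; curves are internally disjoint and
   pass through no vertex other than their endpoints. *)
Record upward_planar_drawing (V : finType) (E : rel V) := UPD {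
  pos : V -> R * R;
  cx : V -> V -> R -> R;
  cy : V -> V -> R -> R;
  pos_inj : forall a b, pos a = pos b -> a = b;
  cx_cont : forall u v t, E u v -> continuity_pt (cx u v) t;
  cy_cont : forall u v t, E u v -> continuity_pt (cy u v) t;
  curve_start : forall u v, E u v -> (cx u v 0, cy u v 0) = pos u;
  curve_end : forall u v, E u v -> (cx u v 1, cy u v 1) = pos v;
  curve_upward : forall u v s t, E u v -> 0 <= s -> s < t -> t <= 1 ->
      cy u v s < cy u v t;
  curve_avoids_vertices : forall u v t w, E u v -> 0 < t < 1 ->
      (cx u v t, cy u v t) <> pos w;
  curves_disjoint : forall u v u' v' s t, E u v -> E u' v' ->
      (u, v) <> (u', v') -> 0 < s < 1 -> 0 < t < 1 ->
      (cx u v s, cy u v s) <> (cx u' v' t, cy u' v' t)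
}.

Definition upward_planar (V : finType) (E : rel V) : Prop :=
  exists D : upward_planar_drawing E, True.

Section Drawing.
Variables (V : finType) (E : rel V) (D : upward_planar_drawing E).

Definition on_drawing (z : R * R) : Prop :=
  (exists w, z = pos D w) \/
  (exists u v t, E u v /\ 0 <= t <= 1 /\ z = (cx D u v t, cy D u v t)).

(* z lies in the outer face: z is not on the drawing and the path-component
   of z in the complement of the drawing is unbounded. *)
Definition in_outer_face (z : R * R) : Prop :=
  ~ on_drawing z /\
  forall M : R, exists (px py : R -> R),
    (forall s, continuity_pt px s) /\ (forall s, continuity_pt py s) /\
    (px 0, py 0) = z /\
    (forall s, 0 <= s <= 1 -> ~ on_drawing (px s, py s)) /\
    M < Rabs (px 1) + Rabs (py 1).

Definition out_left_of (u v1 v2 : V) : Prop :=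
  exists delta, 0 < delta /\
  forall y s t, snd (pos D u) < y < snd (pos D u) + delta ->
    0 <= s <= 1 -> 0 <= t <= 1 -> cy D u v1 s = y -> cy D u v2 t = y ->
    cx D u v1 s < cx D u v2 t.

Definition in_left_of (v u1 u2 : V) : Prop :=
  exists delta, 0 < delta /\
  forall y s t, snd (pos D v) - delta < y < snd (pos D v) ->
    0 <= s <= 1 -> 0 <= t <= 1 -> cy D u1 v s = y -> cy D u2 v t = y ->
    cx D u1 v s < cx D u2 v t.

Definition left_outgoing (u v : V) : Prop :=
  E u v /\ outdeg E u = 2%nat /\ exists v', v' <> v /\ E u v' /\ out_left_of u v v'.
Definition right_outgoing (u v : V) : Prop :=
  E u v /\ outdeg E u = 2%nat /\ exists v', v' <> v /\ E u v' /\ out_left_of u v' v.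
Definition left_incoming (u v : V) : Prop :=
  E u v /\ indeg E v = 2%nat /\ exists u', u' <> u /\ E u' v /\ in_left_of v u u'.
Definition right_incoming (u v : V) : Prop :=
  E u v /\ indeg E v = 2%nat /\ exists u', u' <> u /\ E u' v /\ in_left_of v u' u.

(* The face to the right (resp. left) of arc (u,v) is the outer face:
   points immediately to the right (left) of an interior point of the arc lie
   in the outer face. (Arcs go upward, so "right" is the +x direction.) *)
Definition right_face_outer (u v : V) : Prop :=
  exists t delta, 0 < t < 1 /\ 0 < delta /\
  forall eps, 0 < eps < delta -> in_outer_face (cx D u v t + eps, cy D u v t).
Definition left_face_outer (u v : V) : Prop :=
  exists t delta, 0 < t < 1 /\ 0 < delta /\
  forall eps, 0 < eps < delta -> in_outer_face (cx D u v t - eps, cy D u v t).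

Definition bad_wrt_outer (u v : V) : Prop :=
  (left_outgoing u v /\ left_incoming u v /\ right_face_outer u v) \/
  (right_outgoing u v /\ right_incoming u v /\ left_face_outer u v).

End Drawing.

(* Main.v *)
Require Import Defs.
From mathcomp Require Import all_boot.
From Stdlib Require Import Reals.
From Stdlib Require Import Lra Psatz ClassicalEpsilon.
From mathcomp Require Import all_boot.
Set Implicit Arguments. Unset Strict Implicit. Unset Printing Implicit Defensive.
Local Open Scope R_scope.


Lemma cont_eps (f : R -> R) x : continuity_pt f x ->
  forall eps, 0 < eps -> exists d, 0 < d /\ forall y, Rabs (y - x) < d -> Rabs (f y - f x) < eps.
Proof.
rewrite /continuity_pt /continue_in /limit1_in /limit_in /= /R_dist.
move=> H eps He; case: (H eps He) => d [Hd Hf]; exists d; split => // y Hy.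
case: (Req_dec y x) => [->|Hne]; first by rewrite Rminus_diag Rabs_R0.
apply: (Hf y); split; [split; [exact I | by auto] | exact Hy].
Qed.

Lemma eps_cont (f : R -> R) x :
  (forall eps, 0 < eps -> exists d, 0 < d /\ forall y, Rabs (y - x) < d -> Rabs (f y - f x) < eps) ->
  continuity_pt f x.
Proof.
rewrite /continuity_pt /continue_in /limit1_in /limit_in /= /R_dist.
move=> H eps He; case: (H eps He) => d [Hd Hf]; exists d; split => // y [_ Hy].
exact: Hf.
Qed.

Lemma pos_near (f : R -> R) x : continuity_pt f x -> 0 < f x ->
  exists d, 0 < d /\ forall y, Rabs (y - x) < d -> 0 < f y.
Proof.
move=> H Hp; case: (cont_eps H Hp) => d [Hd Hf]; exists d; split => // y /Hf Hy.
move/Rabs_def2: Hy => [_ ?]; lra.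
Qed.

Lemma limit_nonneg (f : R -> R) x : continuity_pt f x ->
  (forall d, 0 < d -> exists y, Rabs (y - x) < d /\ 0 < f y) -> 0 <= f x.
Proof.
move=> H Hn; case: (Rle_dec 0 (f x)) => // /Rnot_le_lt Hneg.
have Hp : 0 < - f x by lra.
case: (cont_eps H Hp) => d [Hd Hf]; case: (Hn d Hd) => y [/Hf Hy Hy'].
move/Rabs_def2: Hy => [? _]; lra.
Qed.

Lemma glue_cont (f g : R -> R) : continuity f -> continuity g -> f 1 = g 0 ->
  continuity (fun s => if Rle_dec s 1 then f s else g (s - 1)).
Proof.
move=> Hf Hg H10 x; apply: eps_cont => eps He.
case: (cont_eps (Hf x) He) => d1 [Hd1 H1].
case: (cont_eps (Hg (x - 1)) He) => d2 [Hd2 H2].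
case: (Rtotal_order x 1) => [Hx|[Hx|Hx]].
- exists (Rmin d1 (1 - x)); split; first by apply: Rmin_pos; lra.
  move=> y Hy; have := Rmin_l d1 (1 - x); have := Rmin_r d1 (1 - x); move=> Ha Hb.
  move/Rabs_def2: (Hy) => [Hy1 Hy2].
  case: (Rle_dec y 1) => Hy1'; case: (Rle_dec x 1) => Hx1; try lra.
  apply: H1; apply: Rabs_def1; lra.
- subst x.
  replace (1 - 1) with 0 in H2 by ring.
  exists (Rmin d1 d2); split; first by apply: Rmin_pos.
  move=> y Hy; have := Rmin_l d1 d2; have := Rmin_r d1 d2; move=> Ha Hb.
  move/Rabs_def2: (Hy) => [Hy1 Hy2].
  case: (Rle_dec y 1) => Hy1'; case: (Rle_dec 1 1) => Hx1; try lra.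
  + apply: H1; apply: Rabs_def1; lra.
  + rewrite H10; apply: H2; apply: Rabs_def1; lra.
- exists (Rmin d2 (x - 1)); split; first by apply: Rmin_pos; lra.
  move=> y Hy; have := Rmin_l d2 (x - 1); have := Rmin_r d2 (x - 1); move=> Ha Hb.
  move/Rabs_def2: (Hy) => [Hy1 Hy2].
  case: (Rle_dec y 1) => Hy1'; case: (Rle_dec x 1) => Hx1; try lra.
  apply: H2; apply: Rabs_def1; lra.
Qed.

Definition incr (g : R -> R) (T : R) := forall s t, 0 <= s -> s < t -> t <= T -> g s < g t.

Lemma incr_le g T s t : incr g T -> 0 <= s -> s <= t -> t <= T -> g s <= g t.
Proof. move=> H Hs Hst Ht; case: (Rle_lt_or_eq_dec _ _ Hst) => [h|->]; [left; apply: H|right] => //. Qed.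

Lemma incr_inj g T s t : incr g T -> 0 <= s <= T -> 0 <= t <= T -> g s = g t -> s = t.
Proof.
move=> H [Hs1 Hs2] [Ht1 Ht2] E; case: (Rtotal_order s t) => [h|[h|h]] => //.
- have := H s t Hs1 h Ht2; lra.
- have := H t s Ht1 h Hs2; lra.
Qed.

Lemma inv_cont g T t0 eps : incr g T -> 0 <= t0 <= T -> 0 < eps ->
  exists d, 0 < d /\ forall t, 0 <= t <= T -> Rabs (g t - g t0) < d -> Rabs (t - t0) < eps.
Proof.
move=> H [H01 H02] He.
set d1 := if Rlt_dec 0 (t0 - eps/2) then g t0 - g (t0 - eps/2) else 1.
set d2 := if Rlt_dec (t0 + eps/2) T then g (t0 + eps/2) - g t0 else 1.
have Hd1 : 0 < d1.
  rewrite /d1; case: Rlt_dec => h /=; last lra.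
  have : g (t0 - eps/2) < g t0 by apply: H; lra.
  lra.
have Hd2 : 0 < d2.
  rewrite /d2; case: Rlt_dec => h /=; last lra.
  have : g t0 < g (t0 + eps/2) by apply: H; lra.
  lra.
exists (Rmin d1 d2); split; first exact: Rmin_pos.
move=> t [Ht1 Ht2] Hg; have := Rmin_l d1 d2; have := Rmin_r d1 d2; move=> Ha Hb.
move/Rabs_def2: Hg => [Hg1 Hg2].
apply: Rabs_def1.
- case: (Rlt_dec (t - t0) eps) => // /Rnot_lt_le h.
  have h' : t0 + eps/2 < T by lra.
  have E2 : d2 = g (t0 + eps/2) - g t0 by rewrite /d2; case: Rlt_dec => //= ?; lra.
  have : g (t0 + eps/2) < g t by apply: H; lra.
  lra.
- case: (Rlt_dec (- eps) (t - t0)) => // /Rnot_lt_le h.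
  have h' : 0 < t0 - eps/2 by lra.
  have E1 : d1 = g t0 - g (t0 - eps/2) by rewrite /d1; case: Rlt_dec => //= ?; lra.
  have : g t < g (t0 - eps/2) by apply: H; lra.
  lra.
Qed.

Ltac rdec := repeat (match goal with |- context[Rle_dec ?a ?b] => destruct (Rle_dec a b) | H : context[Rle_dec ?a ?b] |- _ => destruct (Rle_dec a b) end; simpl in * ).

Definition clamp (lo hi b : R) := Rmax lo (Rmin hi b).

Lemma clamp_in lo hi b : lo <= hi -> lo <= clamp lo hi b <= hi.
Proof.
move=> h; rewrite /clamp /Rmax /Rmin.
rdec; lra.
Qed.

Lemma clamp_id lo hi b : lo <= b <= hi -> clamp lo hi b = b.
Proof.
move=> h; rewrite /clamp /Rmax /Rmin.
rdec; lra.
Qed.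

Lemma clamp_lip lo hi b b' : lo <= hi -> Rabs (clamp lo hi b - clamp lo hi b') <= Rabs (b - b').
Proof.
move=> h; rewrite /clamp /Rmax /Rmin.
rdec; unfold Rabs; repeat match goal with |- context[Rcase_abs ?a] => destruct (Rcase_abs a) end; lra.
Qed.

Lemma curve_X gx gy T : 0 <= T -> continuity gx -> continuity gy -> incr gy T ->
  exists X : R -> R, continuity X /\
   (forall b, gy 0 <= b <= gy T -> exists t, 0 <= t <= T /\ gy t = b /\ X b = gx t) /\
   (forall t, 0 <= t <= T -> X (gy t) = gx t).
Proof.
move=> HT Hx Hy Hi.
have Hle : gy 0 <= gy T by apply: (incr_le Hi); lra.
have Hex : forall b, gy 0 <= b <= gy T -> exists t, 0 <= t <= T /\ gy t = b.
  move=> b [hb1 hb2].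
  have Hc : continuity (fun t => gy t - b).
    by move=> t; apply: continuity_pt_minus; [apply: Hy | apply: continuity_pt_const => ? ?].
  have Hp : (gy 0 - b) * (gy T - b) <= 0 by nra.
  case: (@IVT_cor (fun t => gy t - b) 0 T Hc HT Hp) => z [hz1 hz2].
  by exists z; split => //; lra.
pose P b t := 0 <= t <= T /\ gy t = clamp (gy 0) (gy T) b.
pose ht b := epsilon (inhabits 0) (P b).
have Hht : forall b, P b (ht b).
  move=> b; apply: (epsilon_spec (inhabits 0) (P b)).
  exact: Hex (clamp_in b Hle).
exists (fun b => gx (ht b)); split; [|split].
- move=> b0; apply: eps_cont => eps He.
  have [Ht0 Hg0] := Hht b0.
  case: (cont_eps (Hx (ht b0)) He) => d1 [Hd1 H1].
  case: (inv_cont Hi Ht0 Hd1) => d2 [Hd2 H2].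
  exists d2; split => // b Hb.
  have [Ht Hg] := Hht b.
  apply: H1; apply: H2 => //; rewrite Hg Hg0.
  exact: Rle_lt_trans (clamp_lip _ _ Hle) Hb.
- move=> b hb; exists (ht b); have [Ht Hg] := Hht b; split => //; split => //.
  by rewrite Hg clamp_id.
- move=> t ht0; have [Ht Hg] := Hht (gy t).
  rewrite clamp_id in Hg; last by split; apply: (incr_le Hi); lra.
  by rewrite (incr_inj Hi Ht ht0 Hg).
Qed.

Lemma cont_comp (f g : R -> R) : continuity f -> continuity g -> continuity (fun x => g (f x)).
Proof. move=> Hf Hg x; have := @continuity_pt_comp f g x (Hf x) (Hg (f x)); by rewrite /comp. Qed.

Lemma cont_minus (f g : R -> R) : continuity f -> continuity g -> continuity (fun x => f x - g x).
Proof. move=> Hf Hg x; have := @continuity_pt_minus f g x (Hf x) (Hg x); by rewrite /minus_fct. Qed.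

Lemma cont_const c : continuity (fun _ : R => c).
Proof. by move=> x; apply: continuity_pt_const => ? ?. Qed.

Lemma topo gx1 gy1 gx2 gy2 T1 T2 (Bad : R -> R -> Prop) :
 0 < T1 -> 0 < T2 -> continuity gx1 -> continuity gy1 -> continuity gx2 -> continuity gy2 ->
 incr gy1 T1 -> incr gy2 T2 ->
 gx1 0 = gx2 0 -> gy1 0 = gy2 0 -> gx1 T1 = gx2 T2 -> gy1 T1 = gy2 T2 ->
 (forall s t, 0 < s < T1 -> 0 < t < T2 -> gx1 s = gx2 t -> gy1 s = gy2 t -> False) ->
 (exists d, 0 < d /\ forall s t, 0 <= s <= T1 -> 0 <= t <= T2 ->
     gy1 T1 - d < gy1 s < gy1 T1 -> gy2 t = gy1 s -> gx1 s < gx2 t) ->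
 (forall t, 0 <= t <= T1 -> Bad (gx1 t) (gy1 t)) ->
 (forall t, 0 <= t <= T2 -> Bad (gx2 t) (gy2 t)) ->
 forall s0, 0 < s0 < T1 -> exists e0, 0 < e0 /\ forall eps, 0 < eps < e0 ->
 forall px py : R -> R, continuity px -> continuity py ->
   px 0 = gx1 s0 + eps -> py 0 = gy1 s0 ->
   (forall r, 0 <= r <= 1 -> ~ Bad (px r) (py r)) ->
   exists t1 t2, 0 <= t1 <= T1 /\ 0 <= t2 <= T2 /\ gx1 t1 < px 1 < gx2 t2 /\ gy1 t1 = py 1.
Proof.
move=> HT1 HT2 Cx1 Cy1 Cx2 Cy2 I1 I2 E0x E0y ETx ETy Hdisj [dl [Hdl Hnear]] B1 B2 s0 Hs0.
have [X1 [CX1 [Ex1 Eq1]]] := curve_X (Rlt_le _ _ HT1) Cx1 Cy1 I1.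
have [X2 [CX2 [Ex2 Eq2]]] := curve_X (Rlt_le _ _ HT2) Cx2 Cy2 I2.
set Y0 := gy1 0; set Y1 := gy1 T1.
have HY : Y0 < Y1 by apply: I1; lra.
have Ex2' : forall b, Y0 <= b <= Y1 -> exists t, 0 <= t <= T2 /\ gy2 t = b /\ X2 b = gx2 t.
  by move=> b hb; apply: Ex2; rewrite -E0y -ETy.
have P2 : forall b, Y0 < b < Y1 -> X1 b <> X2 b.
  move=> b hb HX.
  have [t1 [ht1 [g1 x1]]] := Ex1 b (ltac:(rewrite /Y0 /Y1 in hb; lra)).
  have [t2 [ht2 [g2 x2]]] := Ex2' b (ltac:(lra)).
  apply: (Hdisj t1 t2).
  - split; last (case: ht1 => _ h; case: (Rle_lt_or_eq_dec _ _ h) => // e; rewrite e in g1; rewrite /Y1 in hb; lra).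
    case: ht1 => h _; case: (Rle_lt_or_eq_dec _ _ h) => // e; rewrite -e in g1; rewrite /Y0 in hb; lra.
  - split; last (case: ht2 => _ h; case: (Rle_lt_or_eq_dec _ _ h) => // e; rewrite e in g2; rewrite /Y1 ETy in hb; lra).
    case: ht2 => h _; case: (Rle_lt_or_eq_dec _ _ h) => // e; rewrite -e in g2; rewrite /Y0 E0y in hb; lra.
  - by rewrite -x1 -x2.
  - by rewrite g1 g2.
have P4 : forall b, Y0 < b < Y1 -> X1 b < X2 b.
  move=> b hb.
  set b' := Rmax b (Y1 - dl/2).
  have hb' : b <= b' /\ Y1 - dl/2 <= b' /\ b' < Y1.
    rewrite /b' /Rmax; rdec; lra.
  have Hb' : X1 b' < X2 b'.
    have [t1 [ht1 [g1 x1]]] := Ex1 b' (ltac:(rewrite /Y0 /Y1 in hb hb' *; lra)).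
    have [t2 [ht2 [g2 x2]]] := Ex2' b' (ltac:(lra)).
    rewrite x1 x2; apply: Hnear => //; rewrite g1; rewrite /Y1 in hb'; lra.
  case: (Rtotal_order (X1 b) (X2 b)) => [//|[e|h]]; first by case: (P2 b hb e).
  have Hc : continuity (fun x => X2 x - X1 x) by apply: cont_minus.
  have Hp : (X2 b - X1 b) * (X2 b' - X1 b') <= 0 by nra.
  case: (@IVT_cor (fun x => X2 x - X1 x) b b' Hc (proj1 hb') Hp) => z [hz1 hz2].
  exfalso; apply: (P2 z); lra.
pose I (px py : R -> R) r := Y0 < py r < Y1 /\ X1 (py r) < px r < X2 (py r).
have Hb0 : Y0 < gy1 s0 < Y1 by split; apply: I1; lra.
exists (X2 (gy1 s0) - X1 (gy1 s0)); split; first by have := P4 _ Hb0; lra.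
move=> eps Heps px py Cpx Cpy Hp0 Hq0 Hbad.
have Cf1 : continuity (fun r => py r - Y0) by apply: cont_minus => //; apply: cont_const.
have Cf2 : continuity (fun r => Y1 - py r) by apply: cont_minus => //; apply: cont_const.
have Cf3 : continuity (fun r => px r - X1 (py r)) by apply: cont_minus => //; apply: cont_comp.
have Cf4 : continuity (fun r => X2 (py r) - px r) by apply: cont_minus => //; apply: cont_comp.
have Iopen : forall r0, I px py r0 -> exists d, 0 < d /\ forall r, Rabs (r - r0) < d -> I px py r.
  move=> r0 [[h1 h2] [h3 h4]].
  have [d1 [Hd1 H1]] := pos_near (Cf1 r0) (ltac:(lra)).
  have [d2 [Hd2 H2]] := pos_near (Cf2 r0) (ltac:(lra)).
  have [d3 [Hd3 H3]] := pos_near (Cf3 r0) (ltac:(lra)).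
  have [d4 [Hd4 H4]] := pos_near (Cf4 r0) (ltac:(lra)).
  exists (Rmin (Rmin d1 d2) (Rmin d3 d4)); split.
    by apply: Rmin_pos; apply: Rmin_pos.
  move=> r hr.
  have := Rmin_l (Rmin d1 d2) (Rmin d3 d4); have := Rmin_r (Rmin d1 d2) (Rmin d3 d4).
  have := Rmin_l d1 d2; have := Rmin_r d1 d2; have := Rmin_l d3 d4; have := Rmin_r d3 d4.
  move=> ? ? ? ? ? ?.
  have := H1 r (ltac:(lra)); have := H2 r (ltac:(lra)); have := H3 r (ltac:(lra)); have := H4 r (ltac:(lra)).
  rewrite /I; lra.
have Iclosed : forall r0, 0 <= r0 <= 1 ->
    (forall d, 0 < d -> exists r, Rabs (r - r0) < d /\ I px py r) -> I px py r0.
  move=> r0 hr0 Hn.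
  have G : forall f : R -> R, continuity f -> (forall r, I px py r -> 0 < f r) -> 0 <= f r0.
    move=> f Cf Hf; apply: (limit_nonneg (Cf r0)) => d hd.
    by have [r [hr Ir]] := Hn d hd; exists r; split => //; apply: Hf.
  have g1 := G _ Cf1 (ltac:(move=> r [[? ?] _]; lra)).
  have g2 := G _ Cf2 (ltac:(move=> r [[? ?] _]; lra)).
  have g3 := G _ Cf3 (ltac:(move=> r [_ [? ?]]; lra)).
  have g4 := G _ Cf4 (ltac:(move=> r [_ [? ?]]; lra)).
  have Hb := Hbad r0 hr0.
  case: (Rle_lt_or_eq_dec _ _ g1) => h1; last first.
    exfalso; apply: Hb.
    have e1 : py r0 = Y0 by lra.
    have ex1 : X1 Y0 = gx1 0 by rewrite /Y0 Eq1 //; lra.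
    have ex2 : X2 Y0 = gx1 0 by rewrite /Y0 E0y Eq2 // -?E0x; lra.
    rewrite e1 in g3 g4; have -> : px r0 = gx1 0 by lra.
    rewrite e1; apply: B1; lra.
  case: (Rle_lt_or_eq_dec _ _ g2) => h2; last first.
    exfalso; apply: Hb.
    have e1 : py r0 = Y1 by lra.
    have ex1 : X1 Y1 = gx1 T1 by rewrite /Y1 Eq1 //; lra.
    have ex2 : X2 Y1 = gx1 T1 by rewrite /Y1 ETy Eq2 // -?ETx; lra.
    rewrite e1 in g3 g4; have -> : px r0 = gx1 T1 by lra.
    rewrite e1; apply: B1; lra.
  case: (Rle_lt_or_eq_dec _ _ g3) => h3; last first.
    exfalso; apply: Hb.
    have [t [ht [gt xt]]] := Ex1 (py r0) (ltac:(rewrite /Y0 /Y1 in h1 h2; lra)).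
    have -> : px r0 = gx1 t by lra.
    rewrite -gt; exact: B1.
  case: (Rle_lt_or_eq_dec _ _ g4) => h4; last first.
    exfalso; apply: Hb.
    have [t [ht [gt xt]]] := Ex2' (py r0) (ltac:(lra)).
    have -> : px r0 = gx2 t by lra.
    rewrite -gt; exact: B2.
  rewrite /I; lra.
have I0 : I px py 0.
  have ex : X1 (gy1 s0) = gx1 s0 by apply: Eq1; lra.
  rewrite /I Hp0 Hq0; lra.
pose S r := 0 <= r <= 1 /\ forall r', 0 <= r' <= r -> I px py r'.
have Sb : bound S by exists 1 => r [hr _]; lra.
have Se : exists r, S r by exists 0; split; [lra | move=> r' hr'; have -> : r' = 0 by lra].
have [sm [Hub Hlub]] := @completeness S Sb Se.
have sm0 : 0 <= sm by apply: Hub; split; [lra | move=> r' hr'; have -> : r' = 0 by lra].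
have sm1 : sm <= 1 by apply: Hlub => r [hr _]; lra.
have Below : forall r, 0 <= r < sm -> I px py r.
  move=> r hr; case: (classic (exists s, S s /\ r <= s)) => [[s [[_ Hs] hrs]]|hn].
    by apply: Hs; lra.
  have : sm <= r; last lra.
  apply: Hlub => s Ss; case: (Rle_dec s r) => // /Rnot_le_lt h; exfalso; apply: hn; exists s; split => //; lra.
have Ism : I px py sm.
  case: (Rle_lt_or_eq_dec _ _ sm0) => h; last by rewrite -h.
  apply: Iclosed; first lra.
  move=> d hd; exists (Rmax 0 (sm - d/2)); split.
    apply: Rabs_def1; rewrite /Rmax; rdec; lra.
  apply: Below; rewrite /Rmax; rdec; lra.
have [d [Hd Hop]] := Iopen _ Ism.
have sm1' : sm = 1.
  case: (Rle_lt_or_eq_dec _ _ sm1) => // h; exfalso.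
  have : Rmin 1 (sm + d/2) <= sm; last by rewrite /Rmin; rdec; lra.
  apply: Hub; split; first by rewrite /Rmin; rdec; lra.
  move=> r' hr'; case: (Rlt_le_dec r' sm) => h'; first by apply: Below; lra.
  apply: Hop; apply: Rabs_def1; move: hr'; rewrite /Rmin; rdec; lra.
rewrite sm1' in Ism; case: Ism => [h12 [h3 h4]].
have [t1 [ht1 [gt1 xt1]]] := Ex1 (py 1) (ltac:(rewrite /Y0 /Y1 in h12; lra)).
have [t2 [ht2 [gt2 xt2]]] := Ex2' (py 1) (ltac:(lra)).
exists t1, t2; split => //; split => //; split; last by [].
by rewrite -xt1 -xt2.
Qed.

Definition yh (V : finType) (E : rel V) (D : upward_planar_drawing E) (w : V) : R := snd (Defs.pos D w).

Lemma edge_up (V : finType) (E : rel V) (D : upward_planar_drawing E) a b :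
  E a b -> (yh D a < yh D b)%R.
Proof.
move=> Hab; have := @curve_upward _ _ D a b 0 1 Hab; have hs := curve_start D Hab; have he := curve_end D Hab.
rewrite /yh -hs -he /=; move=> H; apply: H; lra.
Qed.

Lemma path_up (V : finType) (E : rel V) (D : upward_planar_drawing E) x p :
  path E x p -> forall w, w \in p -> (yh D x < yh D w)%R.
Proof.
elim: p x => [|x1 p IH] x //= /andP [Hx Hp] w; rewrite in_cons => /orP [/eqP ->|Hw].
  exact: edge_up.
apply: Rlt_trans (edge_up D Hx) (IH _ Hp _ Hw).
Qed.

Definition ltb (a b : R) : bool := if Rlt_dec a b then true else false.

Lemma ltbP a b : reflect (a < b)%R (ltb a b).
Proof. by rewrite /ltb; case: Rlt_dec => h; constructor. Qed.

Lemma reach (V : finType) (E : rel V) (D : upward_planar_drawing E) s0 :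
  (forall w, indeg E w = 0%N -> w = s0) -> forall w, connect E s0 w.
Proof.
move=> Hs w.
pose low w := [set w' | ltb (yh D w') (yh D w)].
move: (leqnn #|low w|); move: {2}#|low w| => n.
elim: n w => [|n IH] w Hn; (case: (eqVneq (indeg E w) 0%N) => [/Hs ->|Hne]; first exact: connect0);
  (have /card_gt0P [w' Hw'] : (0 < #|[set w' | E w' w]|)%N by rewrite lt0n);
  rewrite inE in Hw'; have hl : w' \in low w by rewrite inE; apply/ltbP; exact: edge_up.
- by move: Hn; rewrite leqn0 => /eqP/cards0_eq Hl; rewrite Hl inE in hl.
- have Hpr : low w' \proper low w.
    apply/properP; split.
      apply/subsetP => z; rewrite !inE => /ltbP h; apply/ltbP.
      exact: Rlt_trans h (edge_up D Hw').
    by exists w' => //; rewrite inE; apply/ltbP; apply: Rlt_irrefl.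
  have := proper_card Hpr => hc.
  apply: connect_trans (IH w' _) (connect1 Hw').
  by rewrite -ltnS; exact: leq_trans hc Hn.
Qed.

Lemma seq_max (V : eqType) (f : V -> R) (l : seq V) x : x \in l ->
  exists c, c \in l /\ forall w, w \in l -> (f w <= f c)%R.
Proof.
elim: l x => [|y l IH] x //= _; case: l IH => [|z l] IH.
  by exists y; split; [rewrite in_cons eqxx | move=> w; rewrite in_cons => /orP [/eqP ->|] //; lra].
have [c [hc Hc]] := IH z (mem_head z l).
case: (Rle_dec (f y) (f c)) => h.
  exists c; split; first by rewrite in_cons hc orbT.
  by move=> w; rewrite in_cons => /orP [/eqP ->|/Hc].
exists y; split; first by rewrite in_cons eqxx.
move=> w; rewrite in_cons => /orP [/eqP ->|/Hc]; lra.
Qed.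

Lemma suffix_path (V : finType) (E : rel V) c x p : c \in x :: p -> path E x p ->
  exists q, path E c q /\ last c q = last x p /\ (forall w, w \in c :: q -> w \in x :: p).
Proof.
elim: p x => [|y p IH] x.
  by rewrite mem_seq1 => /eqP -> _; exists [::].
rewrite in_cons => /orP [/eqP ->|hc] Hp.
  by exists (y :: p).
move: Hp => /= /andP [_ Hp].
have [q [Hq [Hl Hw]]] := IH y hc Hp.
exists q; split => //; split => // w /Hw hw; by rewrite in_cons hw orbT.
Qed.

Lemma two_chains (V : finType) (E : rel V) (D : upward_planar_drawing E) s0 u u' :
  (forall w, connect E s0 w) -> exists c q1 q2, path E c q1 /\ last c q1 = u /\
    path E c q2 /\ last c q2 = u' /\
    forall w, w \in c :: q1 -> w \in c :: q2 -> w = c.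
Proof.
move=> Hr.
have /connectP [p1 Hp1 Hl1] := Hr u.
have /connectP [p2 Hp2 Hl2] := Hr u'.
pose cands := [seq w <- s0 :: p1 | w \in s0 :: p2].
have hs : s0 \in cands by rewrite mem_filter !mem_head.
have [c [hc Hc]] := seq_max (yh D) hs.
move: hc; rewrite mem_filter => /andP [hc2 hc1].
have [q1 [Hq1 [Hm1 Hw1]]] := suffix_path hc1 Hp1.
have [q2 [Hq2 [Hm2 Hw2]]] := suffix_path hc2 Hp2.
exists c, q1, q2; split => //; split; first by rewrite Hm1.
split => //; split; first by rewrite Hm2.
move=> w h1 h2; apply/eqP; case: (eqVneq w c) => // hne.
have hw : w \in cands by rewrite mem_filter (Hw1 _ h1) (Hw2 _ h2).
have := Hc w hw.
move: h1; rewrite in_cons (negbTE hne) /= => h1.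
have := path_up D Hq1 h1; lra.
Qed.

Fixpoint chf (V : Type) (f : V -> V -> R -> R) (pf : V -> R) (w0 : V) (l : seq V) (s : R) : R :=
  match l with
  | [::] => pf w0
  | w1 :: l' => if Rle_dec s 1 then f w0 w1 s else chf f pf w1 l' (s - 1)
  end.

Definition edge_ok (V : finType) (E : rel V) (f : V -> V -> R -> R) (pf : V -> R) :=
  forall a b, E a b -> continuity (f a b) /\ f a b 0 = pf a /\ f a b 1 = pf b.

Lemma chf0 (V : finType) (E : rel V) f pf w l : edge_ok E f pf -> path E w l -> chf f pf w l 0 = pf w.
Proof.
move=> Hf; case: l => [|w1 l] //= /andP [h _].
case: Rle_dec => /= [_|h']; [exact: (proj1 (proj2 (Hf _ _ h))) | lra].
Qed.

Lemma chf_cont (V : finType) (E : rel V) f pf w l : edge_ok E f pf -> path E w l -> continuity (chf f pf w l).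
Proof.
move=> Hf; elim: l w => [|w1 l IH] w /=.
  by move=> _ x; apply: continuity_pt_const => ? ?.
move=> /andP [h hp]; have [Hc [H0 H1]] := Hf _ _ h.
apply: (glue_cont (f := f w w1) (g := chf f pf w1 l)) => //; first exact: IH.
by rewrite H1 (chf0 Hf hp).
Qed.

Lemma size_cons (T : Type) (x : T) l : size (x :: l) = (size l).+1.
Proof. by []. Qed.

Lemma chf_cons (V : Type) (f : V -> V -> R -> R) pf w w1 l s :
  chf f pf w (w1 :: l) s = if Rle_dec s 1 then f w w1 s else chf f pf w1 l (s - 1).
Proof. by []. Qed.

Lemma path_cons' (V : Type) (E : rel V) w w1 l : path E w (w1 :: l) -> E w w1 /\ path E w1 l.
Proof. by move=> /= /andP. Qed.

Lemma chf_end (V : finType) (E : rel V) f pf w l : edge_ok E f pf -> path E w l ->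
  chf f pf w l (INR (size l)) = pf (last w l).
Proof.
move=> Hf; elim: l w => [|w1 l IH] w; first by [].
move=> /(@path_cons' _ E) [h hp].
have [Hc [H0 H1]] := Hf _ _ h.
rewrite chf_cons size_cons S_INR.
case: Rle_dec => /= h'.
  have hl : INR (size l) = 0 by have := pos_INR (size l); lra.
  have : size l = 0%N by apply: INR_eq; rewrite hl.
  by case: l IH hp h' hl => // _ _ _ _ _; rewrite Rplus_0_l; apply: H1.
by rewrite (_ : INR (size l) + 1 - 1 = INR (size l)); [exact: IH | ring].
Qed.

Lemma chf_last (V : finType) (E : rel V) f pf w q v : edge_ok E f pf -> path E w (rcons q v) ->
  forall s, INR (size q) <= s <= INR (size q) + 1 ->
  chf f pf w (rcons q v) s = f (last w q) v (s - INR (size q)).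
Proof.
move=> Hf; elim: q w => [|x q IH] w.
  move=> _ s hs; rewrite /= in hs; rewrite /=.
  by case: Rle_dec => /= h; [rewrite Rminus_0_r | lra].
rewrite rcons_cons => /(@path_cons' _ E) [h hp] s; rewrite size_cons S_INR => hs.
rewrite chf_cons; case: Rle_dec => /= h'.
  have hq : INR (size q) = 0 by have := pos_INR (size q); lra.
  have : size q = 0%N by apply: INR_eq; rewrite hq.
  case: q IH hp hs h' hq => // _ hp hs h' hq.
  move: hp => /= /andP [hxv _].
  move=> _; rewrite (_ : s = 1); last (simpl in hs; lra).
  by rewrite (_ : 1 - (0 + 1) = 0); [|ring]; rewrite (proj2 (proj2 (Hf _ _ h))) (proj1 (proj2 (Hf _ _ hxv))).
rewrite IH //; last lra.
by rewrite (_ : s - 1 - INR (size q) = s - (INR (size q) + 1)); [|ring].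
Qed.

Definition chx (V : finType) (E : rel V) (D : upward_planar_drawing E) :=
  chf (cx D) (fun w => fst (Defs.pos D w)).
Definition chy (V : finType) (E : rel V) (D : upward_planar_drawing E) :=
  chf (cy D) (fun w => snd (Defs.pos D w)).

Lemma okx (V : finType) (E : rel V) (D : upward_planar_drawing E) :
  edge_ok E (cx D) (fun w => fst (Defs.pos D w)).
Proof.
move=> a b h; split; first by move=> t; apply: cx_cont.
by rewrite -(curve_start D h) -(curve_end D h).
Qed.

Lemma oky (V : finType) (E : rel V) (D : upward_planar_drawing E) :
  edge_ok E (cy D) (fun w => snd (Defs.pos D w)).
Proof.
move=> a b h; split; first by move=> t; apply: cy_cont.
by rewrite -(curve_start D h) -(curve_end D h).
Qed.

Lemma ch_incr (V : finType) (E : rel V) (D : upward_planar_drawing E) w l :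
  path E w l -> incr (chy D w l) (INR (size l)).
Proof.
rewrite /chy; elim: l w => [|w1 l IH] w.
  by move=> _ s t hs hst ht; simpl in ht; lra.
move=> /(@path_cons' _ E) [h hp]; have Hl := IH _ hp.
have [_ [H0 H1]] := oky D h.
rewrite size_cons S_INR => s t hs hst ht.
rewrite !chf_cons; case: Rle_dec => /= hs1; case: Rle_dec => /= ht1.
- by apply: (curve_upward D h).
- have h2 : chf (cy D) (fun w => snd (Defs.pos D w)) w1 l 0 <
            chf (cy D) (fun w => snd (Defs.pos D w)) w1 l (t - 1).
    by apply: Hl; lra.
  rewrite (chf0 (oky D) hp) in h2.
  have h3 : cy D w w1 s <= cy D w w1 1.
    case: (Rle_lt_or_eq_dec _ _ hs1) => e; last by rewrite e; lra.
    by left; apply: (curve_upward D h); lra.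
  lra.
- lra.
- by apply: Hl; lra.
Qed.

Lemma ch_pts (V : finType) (E : rel V) (D : upward_planar_drawing E) w0 l s :
 path E w0 l -> 0 <= s <= INR (size l) ->
 (exists w, w \in w0 :: l /\ chx D w0 l s = fst (Defs.pos D w) /\ chy D w0 l s = snd (Defs.pos D w)) \/
 (exists a b t, a \in w0 :: l /\ b \in w0 :: l /\ E a b /\ 0 < t < 1 /\
    chx D w0 l s = cx D a b t /\ chy D w0 l s = cy D a b t /\
    (forall w, w \in w0 :: l -> ~ (yh D a < yh D w < yh D b))).
Proof.
elim: l w0 s => [|w1 l IH] w0 s.
  by move=> _ _; left; exists w0; rewrite mem_head.
move=> Hp; have [h hp] := path_cons' Hp.
rewrite size_cons S_INR => hs.
rewrite /chx /chy !chf_cons; case: Rle_dec => /= h1.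
  case: (Req_dec s 0) => [->|hs0].
    by left; exists w0; rewrite mem_head; split => //; split; [apply: (proj1 (proj2 (okx D h))) | apply: (proj1 (proj2 (oky D h)))].
  case: (Req_dec s 1) => [->|hs1].
    left; exists w1; rewrite in_cons mem_head orbT; split => //.
    by split; [apply: (proj2 (proj2 (okx D h))) | apply: (proj2 (proj2 (oky D h)))].
  right; exists w0, w1, s; rewrite mem_head in_cons mem_head orbT; do 3 (split => //).
  split; first lra.
  do 2 (split => //).
  move=> w; rewrite in_cons => /orP [/eqP ->|]; first lra.
  rewrite in_cons => /orP [/eqP ->|hw]; first lra.
  have := path_up D hp hw; lra.
have hs' : 0 <= s - 1 <= INR (size l) by lra.
case: (IH w1 (s - 1) hp hs') => [[w [hw [hx hy]]]|[a [b [t [ha [hb [hab [ht [hx [hy hbt]]]]]]]]]].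
  by left; exists w; rewrite in_cons hw orbT.
right; exists a, b, t; rewrite !in_cons.
rewrite in_cons in ha; rewrite in_cons in hb.
rewrite ha hb !orbT; do 6 (split => //).
move=> w; rewrite in_cons => /orP [/eqP ->|hw]; last exact: hbt.
have := path_up D Hp; rewrite -in_cons in ha; move=> /(_ a ha); lra.
Qed.

Lemma ch_draw (V : finType) (E : rel V) (D : upward_planar_drawing E) w0 l s :
  path E w0 l -> 0 <= s <= INR (size l) -> on_drawing D (chx D w0 l s, chy D w0 l s).
Proof.
move=> Hp hs; case: (ch_pts D Hp hs) => [[w [_ [hx hy]]]|[a [b [t [_ [_ [hab [ht [hx [hy _]]]]]]]]]].
  by left; exists w; rewrite hx hy; case: (Defs.pos D w).
right; exists a, b, t; split => //; split; first lra.
by rewrite hx hy.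
Qed.

Lemma fin_bound (T : finType) (P : T -> R -> Prop) :
  (forall x B B', P x B -> B <= B' -> P x B') -> (forall x, exists B, P x B) ->
  exists B, forall x, P x B.
Proof.
move=> Hm Hx.
suff : forall l : seq T, exists B, forall x, x \in l -> P x B.
  by case/(_ (enum T)) => B HB; exists B => x; apply: HB; rewrite mem_enum.
elim => [|y l [B HB]]; first by exists 0.
have [By HBy] := Hx y.
exists (Rmax B By) => x; rewrite in_cons => /orP [/eqP ->|hx].
  apply: Hm HBy _; exact: Rmax_r.
apply: Hm (HB _ hx) _; exact: Rmax_l.
Qed.

Lemma fun_bound (f : R -> R) : continuity f -> exists B, forall t, 0 <= t <= 1 -> Rabs (f t) <= B.
Proof.
move=> Hf.
have Hc : forall c, 0 <= c <= 1 -> continuity_pt (fun t => Rabs (f t)) c.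
  move=> c _; have := @continuity_pt_comp f Rabs c (Hf c) (Rcontinuity_abs (f c)); by rewrite /comp.
have [M [HM _]] := @continuity_ab_maj (fun t => Rabs (f t)) 0 1 (ltac:(lra)) Hc.
by exists (Rabs (f M)).
Qed.

Lemma draw_bound (V : finType) (E : rel V) (D : upward_planar_drawing E) :
  exists B, forall z, on_drawing D z -> Rabs (fst z) <= B /\ Rabs (snd z) <= B.
Proof.
have [B1 HB1] := @fin_bound V (fun w B => Rabs (fst (Defs.pos D w)) <= B /\ Rabs (snd (Defs.pos D w)) <= B)
  (ltac:(move=> x B B' [h1 h2] h; split; lra))
  (fun w => ex_intro _ (Rmax (Rabs (fst (Defs.pos D w))) (Rabs (snd (Defs.pos D w))))
        (conj (Rmax_l _ _) (Rmax_r _ _))).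
have [B2 HB2] : exists B, forall p : prod V V, E p.1 p.2 -> forall t, 0 <= t <= 1 ->
     Rabs (cx D p.1 p.2 t) <= B /\ Rabs (cy D p.1 p.2 t) <= B.
  apply: (@fin_bound (prod V V) (fun p B => E p.1 p.2 -> forall t, 0 <= t <= 1 ->
     Rabs (cx D p.1 p.2 t) <= B /\ Rabs (cy D p.1 p.2 t) <= B)).
    by move=> x B B' h hB hE t ht; have [h1 h2] := h hE t ht; split; lra.
  move=> [a b]; case: (boolP (E a b)) => hab; last by exists 0.
  have [Bx HBx] := fun_bound (fun t => cx_cont D t hab).
  have [By HBy] := fun_bound (fun t => cy_cont D t hab).
  exists (Rmax Bx By) => /= _ t ht; split.
    exact: Rle_trans (HBx t ht) (Rmax_l _ _).
  exact: Rle_trans (HBy t ht) (Rmax_r _ _).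
exists (Rmax B1 B2) => z [[w ->]|[a [b [t [hab [ht ->]]]]]].
  have [h1 h2] := HB1 w; split; apply: Rle_trans (Rmax_l _ _); assumption.
have [h1 h2] := HB2 (a, b) hab t ht; split; apply: Rle_trans (Rmax_r _ _); assumption.
Qed.

Lemma cont_scal (sg : R) (f : R -> R) : continuity f -> continuity (fun x => sg * f x).
Proof.
move=> Hf x; have := @continuity_pt_mult (fun _ => sg) f x (cont_const sg x) (Hf x).
by rewrite /mult_fct.
Qed.

Lemma core (V : finType) (E : rel V) (D : upward_planar_drawing E) s0 (sg : R) u u' v :
 (sg = 1 \/ sg = -1) ->
 (forall w, connect E s0 w) ->
 E u v -> E u' v -> u' <> u ->
 (exists d, 0 < d /\ forall y s t, snd (Defs.pos D v) - d < y < snd (Defs.pos D v) ->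
     0 <= s <= 1 -> 0 <= t <= 1 -> cy D u v s = y -> cy D u' v t = y ->
     sg * cx D u v s < sg * cx D u' v t) ->
 (exists t d, 0 < t < 1 /\ 0 < d /\ forall eps, 0 < eps < d ->
     in_outer_face D (cx D u v t + sg * eps, cy D u v t)) -> False.
Proof.
move=> Hsg Hr Euv Eu'v Hne [dn [Hdn Hnear]] [t0 [df [Ht0 [Hdf Hface]]]].
have Hsg2 : sg * sg = 1 by case: Hsg => ->; ring.
have Hsg0 : sg <> 0 by case: Hsg => ->; lra.
have [c [q1 [q2 [Hq1 [L1 [Hq2 [L2 Hsh]]]]]]] := two_chains D u u' Hr.
have Hp1 : path E c (rcons q1 v) by rewrite rcons_path Hq1 L1 Euv.
have Hp2 : path E c (rcons q2 v) by rewrite rcons_path Hq2 L2 Eu'v.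
set n1 := INR (size q1); set n2 := INR (size q2).
have Hn1 : 0 <= n1 by apply: pos_INR.
have Hn2 : 0 <= n2 by apply: pos_INR.
have ES1 : INR (size (rcons q1 v)) = n1 + 1 by rewrite size_rcons S_INR.
have ES2 : INR (size (rcons q2 v)) = n2 + 1 by rewrite size_rcons S_INR.
have Lst1 : forall s, n1 <= s <= n1 + 1 ->
    chx D c (rcons q1 v) s = cx D u v (s - n1) /\ chy D c (rcons q1 v) s = cy D u v (s - n1).
  by move=> s hs; rewrite /chx /chy (chf_last (okx D) Hp1 hs) (chf_last (oky D) Hp1 hs) L1.
have Lst2 : forall s, n2 <= s <= n2 + 1 ->
    chx D c (rcons q2 v) s = cx D u' v (s - n2) /\ chy D c (rcons q2 v) s = cy D u' v (s - n2).
  by move=> s hs; rewrite /chx /chy (chf_last (okx D) Hp2 hs) (chf_last (oky D) Hp2 hs) L2.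
have I1 := ch_incr D Hp1; rewrite ES1 in I1.
have I2 := ch_incr D Hp2; rewrite ES2 in I2.
have C0x1 : chx D c (rcons q1 v) 0 = fst (Defs.pos D c) by apply: (chf0 (okx D) Hp1).
have C0y1 : chy D c (rcons q1 v) 0 = snd (Defs.pos D c) by apply: (chf0 (oky D) Hp1).
have C0x2 : chx D c (rcons q2 v) 0 = fst (Defs.pos D c) by apply: (chf0 (okx D) Hp2).
have C0y2 : chy D c (rcons q2 v) 0 = snd (Defs.pos D c) by apply: (chf0 (oky D) Hp2).
have CTx1 : chx D c (rcons q1 v) (n1 + 1) = fst (Defs.pos D v).
  by rewrite -ES1 /chx (chf_end (okx D) Hp1) last_rcons.
have CTy1 : chy D c (rcons q1 v) (n1 + 1) = snd (Defs.pos D v).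
  by rewrite -ES1 /chy (chf_end (oky D) Hp1) last_rcons.
have CTx2 : chx D c (rcons q2 v) (n2 + 1) = fst (Defs.pos D v).
  by rewrite -ES2 /chx (chf_end (okx D) Hp2) last_rcons.
have CTy2 : chy D c (rcons q2 v) (n2 + 1) = snd (Defs.pos D v).
  by rewrite -ES2 /chy (chf_end (oky D) Hp2) last_rcons.
have Cx1 : continuity (chx D c (rcons q1 v)) by apply: (chf_cont (okx D) Hp1).
have Cy1 : continuity (chy D c (rcons q1 v)) by apply: (chf_cont (oky D) Hp1).
have Cx2 : continuity (chx D c (rcons q2 v)) by apply: (chf_cont (okx D) Hp2).
have Cy2 : continuity (chy D c (rcons q2 v)) by apply: (chf_cont (oky D) Hp2).
have Hsh' : forall w, w \in c :: rcons q1 v -> w \in c :: rcons q2 v -> w = c \/ w = v.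
  move=> w; rewrite !in_cons !mem_rcons !in_cons.
  case: (eqVneq w c) => [->|hwc]; first by left.
  case: (eqVneq w v) => [->|hwv]; first by right.
  rewrite /= => h1 h2; left; apply: Hsh; by rewrite in_cons ?h1 ?h2 orbT.
have Yuv := edge_up D Euv.
have Hy_n1 : chy D c (rcons q1 v) n1 = yh D u.
  have [_ ->] := Lst1 n1 (ltac:(lra)); rewrite Rminus_diag.
  by have [_ [-> _]] := oky D Euv.
have Yuv' := edge_up D Eu'v.
have Hy_n2 : chy D c (rcons q2 v) n2 = yh D u'.
  have [_ ->] := Lst2 n2 (ltac:(lra)); rewrite Rminus_diag.
  by have [_ [-> _]] := oky D Eu'v.
have Eint : forall a b t, E a b -> 0 < t < 1 -> yh D a < cy D a b t < yh D b.
  move=> a b t hab ht; have [_ [h0 h1]] := oky D hab; rewrite /yh -h0 -h1.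
  split; apply: (curve_upward D hab); lra.
have Ulast : forall q, path E c q -> last c q \in c :: q /\ (last c q <> c -> yh D c < yh D (last c q)).
  move=> q hq; split; first exact: mem_last.
  move=> hne'; have : last c q \in c :: q by exact: mem_last.
  rewrite in_cons => /orP [/eqP h|h]; first by case: hne'.
  have := @path_up V E D c q hq _ h. exact.
have Hdisj : forall s t, 0 < s < n1 + 1 -> 0 < t < n2 + 1 ->
    sg * chx D c (rcons q1 v) s = sg * chx D c (rcons q2 v) t ->
    chy D c (rcons q1 v) s = chy D c (rcons q2 v) t -> False.
  move=> s t hs ht hx hy.
  have hx' : chx D c (rcons q1 v) s = chx D c (rcons q2 v) t by apply: (Rmult_eq_reg_l sg).
  have hb1 : yh D c < chy D c (rcons q1 v) s < yh D v.
    rewrite /yh -C0y1 -CTy1; split; apply: I1; lra.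
  have hs' : 0 <= s <= INR (size (rcons q1 v)) by rewrite ES1; lra.
  have ht' : 0 <= t <= INR (size (rcons q2 v)) by rewrite ES2; lra.
  case: (ch_pts D Hp1 hs') => [[w1 [hw1 [x1 y1]]]|[a [b [t1 [ha [hb [hab [ht1 [x1 [y1 hbt1]]]]]]]]]];
  case: (ch_pts D Hp2 ht') => [[w2 [hw2 [x2 y2]]]|[a' [b' [t2 [ha' [hb' [hab' [ht2 [x2 [y2 hbt2]]]]]]]]]].
  - have e : w1 = w2.
      apply: (@pos_inj V E D w1 w2); apply: injective_projections; [rewrite -x1 -x2 | rewrite -y1 -y2] => //.
    subst w2; case: (Hsh' w1 hw1 hw2) => ew; subst w1; rewrite /yh -y1 in hb1; lra.
  - apply: (@curve_avoids_vertices V E D _ _ _ w1 hab' ht2).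
    by rewrite -x2 -y2 -hx' -hy x1 y1; case: (Defs.pos D w1).
  - apply: (@curve_avoids_vertices V E D _ _ _ w2 hab ht1).
    by rewrite -x1 -y1 hx' hy x2 y2; case: (Defs.pos D w2).
  - case: (eqVneq (a, b) (a', b')) => [[ea eb]|hne2]; last first.
      apply: (@curves_disjoint V E D _ _ _ _ _ _ hab hab' _ ht1 ht2); first by move=> e; rewrite e eqxx in hne2.
      by rewrite -x1 -y1 -x2 -y2 hx' hy.
    subst a' b'.
    have hh := Eint a b t1 hab ht1; rewrite -y1 in hh.
    have ea : a = c.
      case: (Hsh' a ha ha') => // e; subst a; lra.
    have eb : b = v.
      case: (Hsh' b hb hb') => // e; subst b; lra.
    subst a b.
    have hu : u = c.
      have [hm hlt] := Ulast q1 Hq1; rewrite L1 in hm hlt.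
      case: (eqVneq u c) => // huc; exfalso; apply: (hbt1 u).
        by move: hm; rewrite !in_cons mem_rcons in_cons => /orP [->|->]; rewrite ?orbT.
      by split; [apply: hlt; apply/eqP | ].
    have hu' : u' = c.
      have [hm hlt] := Ulast q2 Hq2; rewrite L2 in hm hlt.
      case: (eqVneq u' c) => // huc; exfalso; apply: (hbt2 u').
        by move: hm; rewrite !in_cons mem_rcons in_cons => /orP [->|->]; rewrite ?orbT.
      by split; [apply: hlt; apply/eqP | ].
    by apply: Hne; rewrite hu hu'.
have Hnear' : exists d, 0 < d /\ forall s t, 0 <= s <= n1 + 1 -> 0 <= t <= n2 + 1 ->
     chy D c (rcons q1 v) (n1 + 1) - d < chy D c (rcons q1 v) s < chy D c (rcons q1 v) (n1 + 1) ->
     chy D c (rcons q2 v) t = chy D c (rcons q1 v) s ->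
     sg * chx D c (rcons q1 v) s < sg * chx D c (rcons q2 v) t.
  exists (Rmin dn (Rmin (yh D v - yh D u) (yh D v - yh D u'))); split.
    by apply: Rmin_pos => //; apply: Rmin_pos; lra.
  move=> s t hs ht hy hyt.
  have := Rmin_l dn (Rmin (yh D v - yh D u) (yh D v - yh D u')).
  have := Rmin_r dn (Rmin (yh D v - yh D u) (yh D v - yh D u')).
  have := Rmin_l (yh D v - yh D u) (yh D v - yh D u').
  have := Rmin_r (yh D v - yh D u) (yh D v - yh D u').
  move=> m1 m2 m3 m4.
  rewrite CTy1 in hy.
  have hs1 : n1 <= s.
    case: (Rle_lt_dec n1 s) => // h.
    have hh := I1 s n1 (proj1 hs) h (ltac:(lra)); rewrite Hy_n1 in hh; unfold yh in *; lra.
  have ht1 : n2 <= t.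
    case: (Rle_lt_dec n2 t) => // h.
    have hh := I2 t n2 (proj1 ht) h (ltac:(lra)); rewrite Hy_n2 hyt in hh; unfold yh in *; lra.
  have [ex1 ey1] := Lst1 s (ltac:(lra)).
  have [ex2 ey2] := Lst2 t (ltac:(lra)).
  rewrite ex1 ex2; apply: (Hnear (chy D c (rcons q1 v) s)); try lra.
have Bad1 : forall t, 0 <= t <= n1 + 1 ->
    on_drawing D (sg * (sg * chx D c (rcons q1 v) t), chy D c (rcons q1 v) t).
  move=> t ht; rewrite -Rmult_assoc Hsg2 Rmult_1_l; apply: ch_draw => //; rewrite ES1; lra.
have Bad2 : forall t, 0 <= t <= n2 + 1 ->
    on_drawing D (sg * (sg * chx D c (rcons q2 v) t), chy D c (rcons q2 v) t).
  move=> t ht; rewrite -Rmult_assoc Hsg2 Rmult_1_l; apply: ch_draw => //; rewrite ES2; lra.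
have [e0 [He0 Htopo]] := @topo (fun s => sg * chx D c (rcons q1 v) s) (chy D c (rcons q1 v))
  (fun s => sg * chx D c (rcons q2 v) s) (chy D c (rcons q2 v)) (n1 + 1) (n2 + 1)
  (fun a b => on_drawing D (sg * a, b)) (ltac:(lra)) (ltac:(lra))
  (cont_scal sg Cx1) Cy1 (cont_scal sg Cx2) Cy2 I1 I2
  (ltac:(cbv beta; rewrite C0x1 C0x2; reflexivity)) (ltac:(rewrite C0y1 C0y2 //))
  (ltac:(cbv beta; rewrite CTx1 CTx2; reflexivity)) (ltac:(rewrite CTy1 CTy2 //)) Hdisj Hnear' Bad1 Bad2
  (n1 + t0) (ltac:(lra)).
have [B HB] := draw_bound D.
set eps := Rmin e0 df / 2.
have Heps : 0 < eps < e0 /\ eps < df.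
  have := Rmin_l e0 df; have := Rmin_r e0 df; have := Rmin_pos _ _ He0 Hdf; rewrite /eps; lra.
have [_ Hesc] := Hface eps (ltac:(lra)).
have [px [py [Cpx [Cpy [Hp0 [Hav Hbig]]]]]] := Hesc (2 * B + 1).
have [ex0 ey0] := Lst1 (n1 + t0) (ltac:(lra)).
rewrite (_ : n1 + t0 - n1 = t0) in ex0 ey0; last ring.
case: Hp0 => hp0 hq0.
have [t1 [t2 [ht1 [ht2 [[hlt hgt] hy1]]]]] := Htopo eps (proj1 Heps) (fun r => sg * px r) py
  (cont_scal sg Cpx) Cpy
  (ltac:(cbv beta; rewrite hp0 ex0 Rmult_plus_distr_l -Rmult_assoc Hsg2 Rmult_1_l; reflexivity))
  (ltac:(rewrite hq0 ey0 //))
  (ltac:(move=> r hr; rewrite -Rmult_assoc Hsg2 Rmult_1_l; exact: Hav)).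
have D1 := ch_draw D Hp1 (ltac:(rewrite ES1; lra) : 0 <= t1 <= INR (size (rcons q1 v))).
have D2 := ch_draw D Hp2 (ltac:(rewrite ES2; lra) : 0 <= t2 <= INR (size (rcons q2 v))).
have [b1x b1y] := HB _ D1; have [b2x _] := HB _ D2; simpl in b1x, b1y, b2x.
rewrite hy1 in b1y.
have Hpx : Rabs (px 1) <= B.
  case: Hsg => e; rewrite e in hlt hgt; move: b1x b2x; unfold Rabs; repeat match goal with |- context[Rcase_abs ?a] => destruct (Rcase_abs a) end; lra.
lra.
Qed.


Theorem mainTheorem5 (V : finType) (E : rel V) :
  single_source E -> max_inout_deg_le2 E -> upward_planar E ->
  forall (D : upward_planar_drawing E) (u v : V), E u v -> ~ bad_wrt_outer D u v.
Proof.
move=> Hss _ _ D u v Euv.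
have /cards1P [s0 Hs0] : #|[set w | indeg E w == 0%N]| == 1%N by rewrite Hss.
have Hsrc : forall w, indeg E w = 0%N -> w = s0.
  move=> w hw; have : w \in [set w | indeg E w == 0%N] by rewrite inE hw.
  by rewrite Hs0 inE => /eqP.
have Hr := reach D Hsrc.
case=> [[_ [[_ [_ [u' [hne [Eu'v [dn [Hdn Hn]]]]]]] [t [d [ht [hd Hf]]]]]]|
        [_ [[_ [_ [u' [hne [Eu'v [dn [Hdn Hn]]]]]]] [t [d [ht [hd Hf]]]]]]].
- have H := @core V E D s0 1 u u' v (or_introl erefl) Hr Euv Eu'v hne. apply: H.
    exists dn; split => // y s t' hy hs ht' e1 e2; rewrite !Rmult_1_l.
    exact: (Hn y s t' hy hs ht' e1 e2).
  exists t, d; split => //; split => // eps he; rewrite Rmult_1_l; exact: Hf.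
- apply: (@core V E D s0 (-1) u u' v (or_intror erefl) Hr Euv Eu'v hne).
    exists dn; split => // y s t' hy hs ht' e1 e2.
    have := Hn y t' s hy ht' hs e2 e1; lra.
  exists t, d; split => //; split => // eps he.
  rewrite (_ : cx D u v t + -1 * eps = cx D u v t - eps); last ring.
  exact: Hf.
Qed.
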